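(* Let $c\geq 1$ be an integer. For every integer $n\geq 1$, $$ \bar a_c(n) \equiv \begin{cases} 2 \pmod{4} & \text{if } n = k^2 \text{ for some integer } k, \\ 2(c+1) \pmod{4} & \text{if } n = 2k^2 \text{ for some integer } k, \\ 0 \pmod 4 & \text{otherwise}. \end{cases} $$
   Context: For $|q|<1$ and integers $m\geq 1$, write $f_m:=\prod_{j\geq 1}(1-q^{jm})$. For an integer $c\geq 1$, the generalized overcubic partition function $\bar a_c(n)$ is defined by $$\sum_{n\geq 0}\bar a_c(n)q^n=\frac{f_4^{c-1}}{f_1^2f_2^{2c-3}}.$$ Combinatorially, $\bar a_c(n)$ counts overpartitions of $n$ (partitions in which the first occurrence of each part size may be overlined) in which each even part may appear in $c$ different colors (the overlining rule being applied to each colored part size separately), while odd parts have only one color. *)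

(* Defs.v *)
From mathcomp Require Import all_boot all_order all_algebra.
Set Implicit Arguments. Unset Strict Implicit. Unset Printing Implicit Defensive.
Import Order.TTheory GRing.Theory Num.Theory.
Local Open Scope ring_scope.

(* Truncated q-series factor (1 - q^m)^e for an integer exponent e, as a
   polynomial over int that agrees with the true power series modulo
   q^(N+1) whenever m >= 1.  For e < 0 the factor 1/(1-q^m) is replaced by
   the truncated geometric series sum_{t <= N} q^(m t). *)
Definition eta_factor (N m : nat) (e : int) : {poly int} :=
  match e with
  | Posz k => (1 - 'X^m) ^+ k
  | Negz k => (\sum_(t < N.+1) 'X^(m * t)) ^+ k.+1
  end.

(* Truncation (mod q^(N+1)) of  f_4^(c-1) / (f_1^2 f_2^(2c-3))
   = prod_{j>=1} (1-q^{4j})^(c-1) (1-q^j)^(-2) (1-q^{2j})^(-(2c-3));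
   factors with j > N are congruent to 1 mod q^(N+1). *)
Definition overcubic_gen (c N : nat) : {poly int} :=
  \prod_(1 <= j < N.+1)
     (eta_factor N (4 * j) (c%:Z - 1)
      * eta_factor N j (-2)
      * eta_factor N (2 * j) (- (2 * c%:Z - 3))).

Definition abar (c n : nat) : int := (overcubic_gen c n)`_n.

(* Main.v *)
Require Import Defs.
From mathcomp Require Import all_boot all_order all_algebra.
From mathcomp Require Import ring zify.
Set Implicit Arguments. Unset Strict Implicit. Unset Printing Implicit Defensive.
Import Order.TTheory GRing.Theory Num.Theory.

Section Cong.
Local Open Scope ring_scope.
Variable N : nat.
Definition cong (p q : {poly int}) :=
  exists r s : {poly int}, p - q = 'X^(N.+1) * r + s *+ 4.

Lemma cong_eq p q : p = q -> cong p q.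
Proof. move=> ->; exists 0, 0; rewrite subrr; ring. Qed.
Lemma congR p : cong p p. Proof. exact: cong_eq. Qed.
Lemma congS p q : cong p q -> cong q p.
Proof. move=> [r [s e]]; exists (-r), (-s).
have -> : q - p = - (p - q) by ring. rewrite e; ring. Qed.
Lemma congT p q u : cong p q -> cong q u -> cong p u.
Proof. move=> [r [s e]] [r' [s' e']]; exists (r + r'), (s + s').
have -> : p - u = (p - q) + (q - u) by ring. rewrite e e'; ring. Qed.
Lemma congD p q p' q' : cong p q -> cong p' q' -> cong (p + p') (q + q').
Proof. move=> [r [s e]] [r' [s' e']]; exists (r + r'), (s + s').
have -> : p + p' - (q + q') = (p - q) + (p' - q') by ring. rewrite e e'; ring. Qed.
Lemma congM p q p' q' : cong p q -> cong p' q' -> cong (p * p') (q * q').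
Proof. move=> [r [s e]] [r' [s' e']]; exists (r * p' + q * r'), (s * p' + q * s').
have -> : p * p' - q * q' = (p - q) * p' + q * (p' - q') by ring. rewrite e e'; ring. Qed.
Lemma congX p q k : cong p q -> cong (p ^+ k) (q ^+ k).
Proof. move=> h; elim: k => [|k IH]; first exact: congR.
by rewrite !exprS; apply: congM. Qed.
Lemma cong4 p s : cong (p + s *+ 4) p.
Proof. exists 0, s; ring. Qed.

Lemma cong_coef p q : cong p q -> exists z : int, p`_N = q`_N + z * 4.
Proof. move=> [r [s e]]; exists s`_N.
have -> : p = q + ('X^(N.+1) * r + s *+ 4) by rewrite -e; ring.
by rewrite coefD coefD coefXnM ltnSn add0r coefMn mulr_natr. Qed.
End Cong.

Section Helpers.
Local Open Scope ring_scope.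
Definition g (N m : nat) : {poly int} := \sum_(t < N.+1) 'X^(m * t).

Lemma g_inv N m : (0 < m)%N -> cong N ((1 - 'X^m) * g N m) 1.
Proof.
move=> m0; set k := (m * N.+1 - N.+1)%N; exists (- 'X^k), 0.
have e : g N m = \sum_(t < N.+1) ('X^m) ^+ t.
  by apply: eq_bigr => t _; rewrite exprM.
have h := subrX1 ('X^m : {poly int}) N.+1.
rewrite e.
have -> : (1 - 'X^m) * \sum_(t < N.+1) ('X^m : {poly int}) ^+ t
   = - (('X^m - 1) * \sum_(t < N.+1) ('X^m : {poly int}) ^+ t) by ring.
rewrite -h -exprM.
have -> : (m * N.+1 = N.+1 + k)%N.
  by rewrite /k subnKC // leq_pmull.
rewrite exprD; ring.
Qed.

Lemma congB N p q p' q' : cong N p q -> cong N p' q' -> cong N (p - p') (q - q').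
Proof. move=> [r [s e]] [r' [s' e']]; exists (r - r'), (s - s').
have -> : p - p' - (q - q') = (p - q) - (p' - q') by ring. rewrite e e'; ring. Qed.

Lemma cong_trans_eq N p q u : cong N p q -> q = u -> cong N p u.
Proof. by move=> h <-. Qed.
Lemma cong_eq_trans N p q u : p = q -> cong N q u -> cong N p u.
Proof. by move=> ->. Qed.

Lemma factor_cong N c j : (0 < c)%N -> (0 < j)%N ->
  cong N (eta_factor N (4 * j) (c%:Z - 1) * eta_factor N j (-2)
          * eta_factor N (2 * j) (- (2 * c%:Z - 3)))
       ((1 + (g N j - 1) *+ 2) * (1 + (g N (2 * j) - 1) *+ 2) ^+ c.-1).
Proof.
move=> c0 j0.
set x : {poly int} := 'X^j.
set gu := g N j. set gv := g N (2 * j).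
have hu : cong N ((1 - x) * gu) 1 by exact: g_inv.
have e2 : 'X^(2 * j) = x ^+ 2 :> {poly int} by rewrite mulnC exprM.
have e4 : 'X^(4 * j) = x ^+ 4 :> {poly int} by rewrite mulnC exprM.
have hv : cong N ((1 - x ^+ 2) * gv) 1 by rewrite -e2; apply: g_inv; lia.
have k1 : cong N ((1 + x) * gv) gu.
  apply: (cong_eq_trans (q := (1 + x) * gv * 1)); first by ring.
  apply: congT (_ : cong N ((1 + x) * gv * ((1 - x) * gu)) _).
    by apply: congM; [exact: congR | exact: congS].
  apply: (cong_eq_trans (q := ((1 - x ^+ 2) * gv) * gu)); first by ring.
  apply: (cong_trans_eq (q := 1 * gu)); last by ring.
  by apply: congM => //; exact: congR.
have ku : cong N ((1 + x) * gu) (1 + (gu - 1) *+ 2).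
  apply: (cong_eq_trans (q := (1 + (gu - 1) *+ 2) + (1 - (1 - x) * gu))); first by ring.
  apply: (cong_trans_eq (q := (1 + (gu - 1) *+ 2) + (1 - 1))); last by ring.
  by apply: congD; [exact: congR | apply: congB => //; exact: congR].
have kv : cong N ((1 + x ^+ 2) * gv) (1 + (gv - 1) *+ 2).
  apply: (cong_eq_trans (q := (1 + (gv - 1) *+ 2) + (1 - (1 - x ^+ 2) * gv))); first by ring.
  apply: (cong_trans_eq (q := (1 + (gv - 1) *+ 2) + (1 - 1))); last by ring.
  by apply: congD; [exact: congR | apply: congB => //; exact: congR].
case: c c0 => [//|[|c']] _.
- have -> : @eq int (1%:Z - 1)%R 0%R by [].
  have -> : @eq int (-2)%R (Negz 1) by [].
  have -> : @eq int (- (2 * 1%:Z - 3))%R 1%R by [].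
  rewrite /eta_factor /= -/(g N j) -/gu e2.
  apply: (cong_eq_trans (q := ((1 - x) * gu) * ((1 + x) * gu))); first by ring.
  apply: (cong_trans_eq (q := 1 * (1 + (gu - 1) *+ 2))); last by ring.
  by apply: congM.
- have -> : @eq int (c'.+2%:Z - 1)%R c'.+1%:Z by lia.
  have -> : @eq int (-2)%R (Negz 1) by [].
  have -> : @eq int (- (2 * c'.+2%:Z - 3))%R (Negz (2 * c')).
    rewrite NegzE; lia.
  rewrite /eta_factor -/(g N j) -/(g N (2 * j)) -/gu -/gv e4 /=.
  apply: (cong_eq_trans (q := ((1 + x ^+ 2) * gv) ^+ c'.+1 * ((1 - x ^+ 2) * gv) ^+ c'
       * (((1 - x) * gu) * ((1 + x) * gu)))).
    have -> : ((2 * c').+1 = c'.+1 + c')%N by lia.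
    have -> : 1 - x ^+ 4 = (1 + x ^+ 2) * (1 - x ^+ 2) by ring.
    rewrite exprD !exprMn !exprS; ring.
  apply: (cong_trans_eq (q := (1 + (gv - 1) *+ 2) ^+ c'.+1 * 1 ^+ c' * (1 * (1 + (gu - 1) *+ 2)))).
    apply: congM; [apply: congM|apply: congM] => //; exact: congX.
  by rewrite expr1n; ring.
Qed.

Lemma cong_mul2 N x y u v : cong N x (1 + u *+ 2) -> cong N y (1 + v *+ 2) ->
  cong N (x * y) (1 + (u + v) *+ 2).
Proof.
move=> hx hy; apply: congT (congM hx hy) _.
apply: (cong_eq_trans (q := (1 + (u + v) *+ 2) + (u * v) *+ 4)); first by ring.
exact: cong4.
Qed.

Lemma cong_pow2 N v k : cong N ((1 + v *+ 2) ^+ k) (1 + (v *+ k) *+ 2).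
Proof.
elim: k => [|k IH]; first by apply: cong_eq; ring.
rewrite exprSr [v *+ k.+1]mulrSr; apply: cong_mul2 => //; exact: congR.
Qed.

Lemma gen_cong1 c N : (0 < c)%N ->
  cong N (overcubic_gen c N)
    (\prod_(1 <= j < N.+1) ((1 + (g N j - 1) *+ 2) * (1 + (g N (2 * j) - 1) *+ 2) ^+ c.-1)).
Proof.
move=> c0; rewrite /overcubic_gen big_seq [in X in cong _ _ X]big_seq.
apply: (big_ind2 (cong N)); first exact: congR.
  by move=> *; apply: congM.
move=> j; rewrite mem_index_iota => /andP [j1 _]; exact: factor_cong.
Qed.

Lemma gen_cong2 c N : (0 < c)%N ->
  cong N (overcubic_gen c N)
    (1 + (\sum_(1 <= j < N.+1) ((g N j - 1) + (g N (2 * j) - 1) *+ c.-1)) *+ 2).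
Proof.
move=> c0; apply: congT (gen_cong1 N c0) _.
apply: (big_ind2 (fun x y => cong N x (1 + y *+ 2))).
- by apply: cong_eq; ring.
- by move=> *; apply: cong_mul2.
- move=> j _; apply: cong_mul2; first exact: congR.
  exact: cong_pow2.
Qed.

Lemma sym_sum (f : nat -> nat -> {poly int}) n : (forall i k, f i k = f k i) ->
  \sum_(0 <= i < n) \sum_(0 <= k < n) f i k =
  \sum_(0 <= i < n) f i i + (\sum_(0 <= i < n) \sum_(0 <= k < i) f i k) *+ 2.
Proof.
move=> fs; elim: n => [|n IH]; first by rewrite !big_geq // mul0rn addr0.
rewrite !big_nat_recr //=.
have -> : \sum_(0 <= i < n) \sum_(0 <= k < n.+1) f i k =
          \sum_(0 <= i < n) \sum_(0 <= k < n) f i k + \sum_(0 <= i < n) f n i.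
  rewrite -big_split /=; apply: eq_bigr => i _; by rewrite big_nat_recr //= fs.
rewrite IH mulrnDl; ring.
Qed.

Lemma g_sub1 N m : g N m - 1 = \sum_(0 <= t < N) 'X^(m * t.+1).
Proof.
rewrite /g big_ord_recl /= muln0 expr0 [1 + _]addrC addrK big_mkord.
by apply: eq_bigr => i _; rewrite /bump.
Qed.

Definition S1 N : {poly int} := \sum_(0 <= i < N) 'X^(i.+1 * i.+1).
Definition S2 N : {poly int} := \sum_(0 <= i < N) 'X^(2 * i.+1 * i.+1).

Lemma sumA_eq N : exists D, \sum_(1 <= j < N.+1) (g N j - 1) = S1 N + D *+ 2.
Proof.
rewrite big_add1 /=.
under eq_bigr => i _ do rewrite g_sub1.
rewrite (@sym_sum (fun i k : nat => 'X^(i.+1 * k.+1))); last by move=> i k; rewrite mulnC.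
by eexists.
Qed.

Lemma sumB_eq N : exists D, \sum_(1 <= j < N.+1) (g N (2 * j) - 1) = S2 N + D *+ 2.
Proof.
rewrite big_add1 /=.
under eq_bigr => i _ do rewrite g_sub1.
rewrite (@sym_sum (fun i k : nat => 'X^(2 * i.+1 * k.+1))); last by move=> i k; rewrite mulnAC.
by eexists.
Qed.

Lemma gen_cong3 c N : (0 < c)%N ->
  cong N (overcubic_gen c N) (1 + (S1 N + S2 N *+ c.-1) *+ 2).
Proof.
move=> c0; apply: congT (gen_cong2 N c0) _.
rewrite big_split /= sumrMnl.
have [D1 ->] := sumA_eq N. have [D2 ->] := sumB_eq N.
exists 0, (D1 + D2 *+ c.-1).
rewrite !mulrnDl -!mulrnA; ring.
Qed.

Lemma count_one (h : nat -> nat) N k : injective h -> (k < N)%N -> N = h k.+1 ->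
  \sum_(0 <= i < N) ((N == h i.+1)%:R : int) = 1.
Proof.
move=> hi kN eN; rewrite big_mkord (bigD1 (Ordinal kN)) //= -eN eqxx big1 ?addr0 //.
move=> i ne; case: eqP => // e; exfalso; move/eqP: ne; apply; apply: val_inj => /=.
by apply/succn_inj/hi; rewrite -e.
Qed.

Lemma count_zero (h : nat -> nat) N : (forall i, (i < N)%N -> N != h i.+1) ->
  \sum_(0 <= i < N) ((N == h i.+1)%:R : int) = 0.
Proof.
move=> hn; rewrite big_mkord big1 // => i _.
by rewrite (negbTE (hn i (ltn_ord i))).
Qed.

Lemma sq_ne_2sq k m : (0 < k)%N -> (k ^ 2 <> 2 * m ^ 2)%N.
Proof.
move=> k0 e.
have m0 : (0 < m)%N.
  case: m e => // e; move: e; rewrite muln0 => /eqP; rewrite expn_eq0 /=; lia.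
have := congr1 (logn 2) e.
rewrite lognX lognM ?expn_gt0 ?m0 // lognX (_ : logn 2 2 = 1) //; lia.
Qed.

Lemma inj_sq : injective (fun i : nat => i * i)%N.
Proof. by move=> a b /= /eqP; rewrite !mulnn eqn_sqr => /eqP. Qed.
Lemma inj_2sq : injective (fun i : nat => 2 * i * i)%N.
Proof. by move=> a b /= /eqP; rewrite -!mulnA eqn_pmul2l // !mulnn eqn_sqr => /eqP. Qed.

Lemma coefS1 N : (S1 N)`_N = \sum_(0 <= i < N) ((N == i.+1 * i.+1)%N%:R : int).
Proof. by rewrite /S1 coef_sum; apply: eq_bigr => i _; rewrite coefXn. Qed.
Lemma coefS2 N : (S2 N)`_N = \sum_(0 <= i < N) ((N == 2 * i.+1 * i.+1)%N%:R : int).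
Proof. by rewrite /S2 coef_sum; apply: eq_bigr => i _; rewrite coefXn. Qed.

End Helpers.

Theorem theorem1p1 (c n : nat) (hc : (1 <= c)%N) (hn : (1 <= n)%N) :
  ((exists k : nat, n = (k ^ 2)%N) -> (abar c n = 2 %[mod 4])%Z) /\
  ((exists k : nat, n = (2 * k ^ 2)%N) ->
      (abar c n = 2 * (c%:Z + 1) %[mod 4])%Z) /\
  (~ (exists k : nat, n = (k ^ 2)%N) -> ~ (exists k : nat, n = (2 * k ^ 2)%N) ->
      (abar c n = 0 %[mod 4])%Z).
Proof.
have [z ez] := cong_coef (gen_cong3 n hc).
have E : abar c n = (((S1 n)`_n + (S2 n)`_n *+ c.-1) *+ 2 + z * 4)%R.
  rewrite /abar ez coefD coef1 coefMn coefD coefMn.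
  by rewrite (_ : (n == 0)%N = false) ?add0r //; lia.
rewrite coefS1 coefS2 in E.
split; [|split].
- move=> [k ek].
  have k0 : (0 < k)%N by move: hn; rewrite ek; case: k {ek} => //.
  case: k k0 ek => // k _ ek.
  rewrite (@count_one (fun i => i * i)%N n k) in E; first last.
  + by rewrite ek mulnn.
  + rewrite ek; nia.
  + exact: inj_sq.
  rewrite (@count_zero (fun i => 2 * i * i)%N n) in E; last first.
    move=> i _; apply/eqP => e; apply: (@sq_ne_2sq k.+1 i.+1) => //.
    by rewrite -ek e -mulnA mulnn.
  by rewrite E mul0rn addr0 addrC modzMDl.
- move=> [k ek].
  have k0 : (0 < k)%N by move: hn; rewrite ek; case: k {ek} => //.
  case: k k0 ek => // k _ ek.
  rewrite (@count_one (fun i => 2 * i * i)%N n k) in E; first last.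
  + by rewrite ek -mulnA mulnn.
  + rewrite ek; nia.
  + exact: inj_2sq.
  rewrite (@count_zero (fun i => i * i)%N n) in E; last first.
    move=> i _; apply/eqP => e; apply: (@sq_ne_2sq i.+1 k.+1) => //.
    by rewrite -mulnn -e ek.
  clear ez; case: c hc E => // c _ E.
  have -> : abar c.+1 n = (2 * (c.+1%:Z + 1) + (z - 1) * 4)%R.
    rewrite E add0r /=; rewrite -mulr_natr; lia.
  by rewrite addrC modzMDl.
- move=> ns n2s.
  rewrite (@count_zero (fun i => i * i)%N n) in E; last first.
    by move=> i _; apply/eqP => e; apply: ns; exists i.+1; rewrite e mulnn.
  rewrite (@count_zero (fun i => 2 * i * i)%N n) in E; last first.
    by move=> i _; apply/eqP => e; apply: n2s; exists i.+1; rewrite e -mulnA mulnn.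
  rewrite E (_ : ((0 + 0 *+ c.-1) *+ 2 + z * 4 = z * 4 + 0)%R) ?modzMDl //.
  by rewrite mul0rn add0r ?mul0rn ?add0r addr0.
Qed.
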